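(* Let $m\in[0..\frac n2-1]$. Let $x$ be a random bit string in $\{0,1\}^n$ such that $x_i=1$ for all $i\in[1..2m+2]$ and the bits $x_i$, $i\in[2m+3..n]$, are independent and uniformly distributed in $\{0,1\}$. Then for any $\delta\in[0,2]$, $E[\mathrm{HLB}_\delta(x)]\le 2m+4$.
   Context: Let $n$ be an even positive integer. For $x\in\{0,1\}^n$ consider the blocks $(x_{2\ell+1},x_{2\ell+2})$, $\ell=0,\dots,\frac n2-1$. If $x\neq(1,\dots,1)$, let $m$ be the smallest $\ell$ with $x_{2\ell+1}\neq 1$ or $x_{2\ell+2}\neq 1$, and define $\mathrm{DLB}(x)=2m+1$ if $x_{2m+1}+x_{2m+2}=0$ and $\mathrm{DLB}(x)=2m$ if $x_{2m+1}+x_{2m+2}=1$; set $\mathrm{DLB}(1,\dots,1)=n$. For a real parameter $\delta$, $\mathrm{HLB}_\delta(x)=2m$ if $\mathrm{DLB}(x)=2m+1$, $\mathrm{HLB}_\delta(x)=2m+2-\delta$ if $\mathrm{DLB}(x)=2m$ (for $m\in\{0,\dots,\frac n2-1\}$), and $\mathrm{HLB}_\delta(x)=n$ if $\mathrm{DLB}(x)=n$. *)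

(* Defs.v *)
(* Bit strings x in {0,1}^n are n.-tuples of bools; the
   paper's 1-based bit x_{i} is (nth false x (i-1)) here. *)
From HB Require Import structures.
From mathcomp Require Import all_boot all_order all_algebra.
Set Implicit Arguments. Unset Strict Implicit. Unset Printing Implicit Defensive.
Import Order.TTheory GRing.Theory Num.Theory.
Local Open Scope ring_scope.

Definition bit n (x : n.-tuple bool) (i : nat) : bool := nth false x i.

Definition block_not_ones n (x : n.-tuple bool) (l : nat) : bool :=
  ~~ (bit x l.*2 && bit x l.*2.+1).

Definition first_block n (x : n.-tuple bool) : nat :=
  find (block_not_ones x) (iota 0 n./2).

Definition DLB n (x : n.-tuple bool) : nat :=
  let m := first_block x in
  if m == n./2 then n
  else if (bit x m.*2 + bit x m.*2.+1 == 0)%N then m.*2.+1 else m.*2.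

Definition HLB {R : realFieldType} (delta : R) n (x : n.-tuple bool) : R :=
  let d := DLB x in
  if d == n then n%:R
  else if odd d then (d.-1)%:R
  else (d.+2)%:R - delta.

(* Expectation of HLB_delta(x) when x_1..x_{2m+2} = 1 and the remaining
   n-2m-2 bits are independent uniform: uniform average over all such x. *)
Definition E_HLB {R : realFieldType} (delta : R) (n m : nat) : R :=
  (\sum_(x : n.-tuple bool | [forall i : 'I_n, (i < m.*2.+2)%N ==> bit x i])
     HLB delta x) / (2 ^ (n - m.*2.+2))%:R.

(* Main.v *)
Require Import Defs.
From HB Require Import structures.
From mathcomp Require Import all_boot all_order all_algebra.
From mathcomp Require Import ring lra zify.
Import Order.TTheory GRing.Theory Num.Theory.
Local Open Scope ring_scope.

Definition bns (s : seq bool) (l : nat) : bool :=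
  ~~ (nth false s l.*2 && nth false s l.*2.+1).
Definition fb (s : seq bool) (k : nat) : nat := find (bns s) (iota 0 k).

Lemma fb_cons a b y k :
  fb [:: a, b & y] k.+1 = if a && b then (fb y k).+1 else 0%N.
Proof.
rewrite /fb /= {1}/bns /=.
case: (a && b) => //=.
have -> : iota 1 k = map (addn 1) (iota 0 k) by rewrite -iotaDl.
by rewrite find_map.
Qed.

Lemma fb_le s k : (fb s k <= k)%N.
Proof. by rewrite /fb -{2}(size_iota 0 k) find_size. Qed.

Lemma fb_pre c y k : fb (nseq c.*2 true ++ y) (c + k) = (c + fb y k)%N.
Proof.
elim: c => [|c IH] //=.
rewrite addSn /=.
by rewrite fb_cons /= IH.
Qed.

Definition G {R : realFieldType} (delta : R) (k : nat) (s : seq bool) : R :=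
  let j := fb s k in
  if j == k then (k.*2)%:R
  else if (nth false s j.*2 + nth false s j.*2.+1 == 0)%N then (j.*2)%:R
  else (j.*2.+2)%:R - delta.

Lemma G_cons {R : realFieldType} (delta : R) k a b y :
  G delta k.+1 [:: a, b & y] =
  if a && b then 2 + G delta k y
  else if (a + b == 0)%N then 0 else 2 - delta.
Proof.
rewrite /G fb_cons.
case: (a && b) => /=.
  rewrite eqSS; case: eqP => _.
    by rewrite doubleS -addn2 natrD addrC.
  case: ifP => _.
    by rewrite doubleS -addn2 natrD addrC.
  rewrite doubleS -(addn2 (fb y k).*2.+2) natrD; lra.
by case: ifP => //= _; rewrite mulr0n.
Qed.

Lemma HLB_pre {R : realFieldType} (delta : R) c k (x : (c.*2 + k.*2).-tuple bool) y :
  val x = nseq c.*2 true ++ y ->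
  HLB delta x = (c.*2)%:R + G delta k y.
Proof.
move=> Ex0.
have Ex : tval x = nseq c.*2 true ++ y := Ex0.
have Eh : ((c.*2 + k.*2)./2 = c + k)%N by rewrite -doubleD doubleK.
have Eb : forall i, nth false x (c.*2 + i) = nth false y i.
  by move=> i; rewrite Ex nth_cat size_nseq ltnNge leq_addr /= addKn.
rewrite /HLB /DLB /first_block Eh.
have -> : find (block_not_ones x) (iota 0 (c + k)) = fb x (c + k) by [].
have Ef : fb x (c + k) = (c + fb y k)%N by rewrite Ex fb_pre.
rewrite Ef /G.
have := fb_le y k.
case: (fb y k =P k) => [->|Hne] _.
  by rewrite !eqxx /= natrD.
rewrite eqn_add2l (introF eqP Hne) /bit !doubleD -addnS !Eb.
set j := fb y k.
case: (_ + _ == 0)%N.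
  have -> : ((c.*2 + j.*2.+1) == c.*2 + k.*2) = false.
    apply/negbTE; apply/negP => /eqP /(congr1 odd).
    by rewrite !oddD !odd_double /= odd_double.
  by rewrite oddD !odd_double /= addnS /= odd_double natrD.
have -> : (c.*2 + j.*2 == c.*2 + k.*2) = false.
  rewrite eqn_add2l; apply/negbTE/eqP => /(congr1 half); rewrite !doubleK; exact: Hne.
rewrite oddD !odd_double /=.
have -> : (c.*2 + j.*2).+2 = (c.*2 + j.*2.+2)%N by rewrite !addnS.
rewrite natrD; lra.
Qed.
Lemma sum_cons {R : realFieldType} N (F : seq bool -> R) :
  \sum_(x : N.+1.-tuple bool) F x =
  \sum_(t : N.-tuple bool) (F (true :: t) + F (false :: t)).
Proof.
rewrite (reindex (fun p : bool * N.-tuple bool => cons_tuple p.1 p.2)) /=.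
  rewrite -(pair_bigA _ (fun b (t : N.-tuple bool) => F (b :: t))) /=.
  by rewrite big_bool /= big_split.
apply: onW_bij.
exists (fun x : N.+1.-tuple bool => (thead x, [tuple of behead x])).
  by case=> b t /=; congr pair; apply: val_inj.
by move=> x; case: x / tupleP => b t; apply: val_inj.
Qed.

Lemma sum_pre {R : realFieldType} c N (F : seq bool -> R) :
  \sum_(x : (c + N).-tuple bool) (if all id (take c x) then F x else 0) =
  \sum_(t : N.-tuple bool) F (nseq c true ++ t).
Proof.
elim: c F => [|c IH] F.
  by apply: eq_bigr => x _; rewrite take0.
rewrite (sum_cons (c + N) (fun s => if all id (take c.+1 s) then F s else 0)) /=.
rewrite -(IH (fun s => F (true :: s))).
by apply: eq_bigr => t _; rewrite addr0.
Qed.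

Lemma forall_take n (x : n.-tuple bool) c : (c <= n)%N ->
  [forall i : 'I_n, (i < c)%N ==> bit x i] = all id (take c x).
Proof.
move=> Hc.
have Hs : size (take c x) = c by rewrite size_take size_tuple; apply/minn_idPl.
apply/forallP/(all_nthP false).
  move=> H i; rewrite Hs => Hi.
  have Hin : (i < n)%N by apply: leq_trans Hc.
  by have := H (Ordinal Hin); rewrite /= Hi /= nth_take.
move=> H i; apply/implyP => Hi.
by have := H i; rewrite Hs nth_take //; apply.
Qed.

Lemma sum_constR {R : realFieldType} N (a : R) :
  \sum_(t : N.-tuple bool) a = a * (2 ^ N)%:R.
Proof.
rewrite sumr_const.
have -> : #|[pred x : N.-tuple bool | true]| = (2 ^ N)%N.
  by rewrite -(card_bool) -card_tuple; apply: eq_card.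
by rewrite mulr_natr.
Qed.

Lemma sum_G {R : realFieldType} (delta : R) k : 0 <= delta ->
  \sum_(t : (k.*2).-tuple bool) G delta k t <= 2 * (2 ^ k.*2)%:R.
Proof.
move=> Hd; elim: k => [|k IH].
  rewrite big1 ?mulr1 // => t _.
rewrite (sum_cons (k.*2).+1) /=.
rewrite (sum_cons (k.*2) (fun s => G delta k.+1 (true :: s) + G delta k.+1 (false :: s))) /=.
rewrite (eq_bigr (fun t : (k.*2).-tuple bool => (6 - (delta + delta)) + G delta k t)); last first.
  move=> t _; rewrite !G_cons /=; lra.
rewrite big_split /= sum_constR.
have -> : (2 ^ (k.+1).*2)%:R = 4 * (2 ^ k.*2)%:R :> R.
  by rewrite doubleS !expnS mulnA natrM.
have H2 : 0 <= (2 ^ k.*2)%:R :> R by [].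
nra.
Qed.
Lemma all_nseq (s : seq bool) : all id s -> s = nseq (size s) true.
Proof. by elim: s => [|[] s IH] //= /IH <-. Qed.

Theorem lemma6 (R : realFieldType) (n m : nat) (delta : R) :
  (0 < n)%N -> ~~ odd n -> (m < n./2)%N ->
  0 <= delta -> delta <= 2 ->
  E_HLB delta n m <= (m.*2 + 4)%:R.
Proof.
move=> n0 ev hm d0 d2.
have [k Ek] : exists k, n = (m.*2.+2 + k.*2)%N.
  exists (n./2 - m.+1)%N.
  rewrite doubleB -doubleS subnKC; first by rewrite even_halfK.
  by rewrite leq_double.
subst n.
rewrite /E_HLB big_mkcond /=.
rewrite (eq_bigr (fun x : (m.*2.+2 + k.*2).-tuple bool =>
   if all id (take m.*2.+2 x) then (m.*2.+2)%:R + G delta k (drop m.*2.+2 x) else 0)); last first.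
  move=> x _; rewrite (forall_take _ x (m.*2.+2)) ?leq_addr //.
  case: ifP => // H; apply: (HLB_pre delta (m.+1) k x).
  rewrite -[\val x](cat_take_drop m.*2.+2 x); congr (_ ++ _).
  rewrite (all_nseq _ H) size_take size_tuple.
  case: ifP => //; rewrite -{1}[m.*2.+2]addn0 ltn_add2l => /negbT; rewrite -leqNgt leqn0 double_eq0 => /eqP ->.
  by rewrite /= addn0.
have E := sum_pre (m.*2.+2) (k.*2) (fun s => (m.*2.+2)%:R + G delta k (drop m.*2.+2 s)).
cbv beta in E; rewrite E.
rewrite (eq_bigr (fun t : (k.*2).-tuple bool => (m.*2.+2)%:R + G delta k t)); last first.
  by move=> t _; rewrite drop_cat size_nseq ltnn subnn drop0.
rewrite big_split /= sum_constR.
have HS := sum_G delta k d0.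
have HP : 0 < (2 ^ k.*2)%:R :> R by rewrite ltr0n expn_gt0.
have -> : (m.*2 + 4 = m.*2.+2 + 2)%N by lia.
rewrite addKn natrD ler_pdivrMr //.
nra.
Qed.
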